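(* Let $X$ come from the $J$-state HMM of the context, let $L_0\in\mathbb N$, $L\ge0$, and let $h_1,\dots,h_{L_0}$ be functions for which the expectations below are finite. Define $M^x=(E_H[h_l(X_1)K_L(x,X_2)h_m(X_3)])_{l,m\le L_0}$, $P=(E_H[h_l(X_1)h_m(X_3)])_{l,m\le L_0}$, $D^x=\mathrm{diag}(K_L[f_j](x))_{j\le J}$, $O=(E_H[h_l(X_1)\mid\theta_1=j])_{l\le L_0,j\le J}$. Then $$M^x=O\,\mathrm{diag}(\pi)\,Q\,D^x\,Q\,O^\intercal,\qquad P=O\,\mathrm{diag}(\pi)\,Q^2\,O^\intercal.$$ Moreover, if $V\in\mathbb R^{L_0\times J}$ is such that $V^\intercal PV$ is invertible, then $B^x:=(V^\intercal PV)^{-1}V^\intercal M^xV$ satisfies $$B^x=(QO^\intercal V)^{-1}D^x(QO^\intercal V),$$ so the matrices $(B^x:x\in\mathbb R)$ are simultaneously diagonalisable, $B^x$ having eigenvalues $(K_L[f_j](x))_{j\le J}$.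
   Context: $J$-state HMM: $\theta=(\theta_n)$ is a Markov chain on $\{1,\dots,J\}$ with transition matrix $Q$ and $\theta_1\sim\pi$; given $\theta$, the $X_n$ are independent with Lebesgue densities $f_{\theta_n}$; $E_H$ is expectation under this model. $K$ is a bounded Lipschitz function supported in $[-1,1]$, $K_L(x,y)=2^LK(2^L(x-y))$ and $K_L[f](x)=\int K_L(x,y)f(y)\,dy$. *)

(* Defs.v *)
From HB Require Import structures.
From mathcomp Require Import all_boot all_order all_algebra.
From mathcomp Require Import all_classical all_reals all_analysis.
Set Implicit Arguments. Unset Strict Implicit. Unset Printing Implicit Defensive.
Import Order.TTheory GRing.Theory Num.Theory.
Local Open Scope ring_scope.

Section HMMdefs.
Variable R : realType.
Notation leb := (@lebesgue_measure R).

Definition KL (K : R -> R) (L : nat) (x y : R) : R :=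
  2 ^+ L * K (2 ^+ L * (x - y)).

Definition KLf (K : R -> R) (L : nat) (g : R -> R) (x : R) : R :=
  Rintegral leb setT (fun y => KL K L x y * g y).

(* J-state HMM with initial law pi, transition matrix Q and emission
   densities f j (state j : 'I_J).  Expectation E_H[g(X_1,X_2,X_3)],
   computed by conditioning on (theta_1,theta_2,theta_3):
   sum_{j1 j2 j3} pi_{j1} Q_{j1 j2} Q_{j2 j3} E[g(X1,X2,X3) | theta = (j1,j2,j3)],
   the conditional law of (X1,X2,X3) having density f j1 (x) f j2 (x) f j3. *)
Definition hmmE3 (J : nat) (pi : 'rV[R]_J) (Q : 'M[R]_J) (f : 'I_J -> R -> R)
    (g : R -> R -> R -> R) : R :=
  \sum_(j1 < J) \sum_(j2 < J) \sum_(j3 < J)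
    pi 0 j1 * Q j1 j2 * Q j2 j3 *
    fine (\int[leb]_x1 \int[leb]_x2 \int[leb]_x3
            ((g x1 x2 x3 * f j1 x1 * f j2 x2 * f j3 x3)%:E))%E.

Definition hmmCond1 (J : nat) (f : 'I_J -> R -> R) (h : R -> R) (j : 'I_J) : R :=
  Rintegral leb setT (fun x => h x * f j x).

Definition Mmat (J L0 : nat) (pi : 'rV[R]_J) (Q : 'M[R]_J) (f : 'I_J -> R -> R)
    (K : R -> R) (L : nat) (h : 'I_L0 -> R -> R) (x : R) : 'M[R]_(L0, L0) :=
  \matrix_(l < L0, m < L0)
     hmmE3 pi Q f (fun x1 x2 x3 => h l x1 * KL K L x x2 * h m x3).

Definition Pmat (J L0 : nat) (pi : 'rV[R]_J) (Q : 'M[R]_J) (f : 'I_J -> R -> R)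
    (h : 'I_L0 -> R -> R) : 'M[R]_(L0, L0) :=
  \matrix_(l < L0, m < L0) hmmE3 pi Q f (fun x1 _ x3 => h l x1 * h m x3).

Definition Dmat (J : nat) (f : 'I_J -> R -> R) (K : R -> R) (L : nat) (x : R)
    : 'M[R]_J :=
  diag_mx (\row_(j < J) KLf K L (f j) x).

Definition Omat (J L0 : nat) (f : 'I_J -> R -> R) (h : 'I_L0 -> R -> R)
    : 'M[R]_(L0, J) :=
  \matrix_(l < L0, j < J) hmmCond1 f (h l) j.

Definition Bmat (J L0 : nat) (M P : 'M[R]_(L0, L0)) (V : 'M[R]_(L0, J)) : 'M[R]_J :=
  invmx (V^T *m P *m V) *m (V^T *m M *m V).

End HMMdefs.

(* Main.v *)
Require Import Defs.
From HB Require Import structures.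
From mathcomp Require Import all_boot all_order all_algebra.
From mathcomp Require Import all_classical all_reals all_analysis.
From mathcomp Require Import ring lra measurable_realfun.
Import Order.TTheory GRing.Theory Num.Theory.
Import numFieldNormedType.Exports.
Local Open Scope ring_scope.

Lemma charpoly_conj (R : comNzRingType) n (S T D : 'M[R]_n) :
  T *m S = 1%:M -> char_poly (T *m D *m S) = char_poly D.
Proof.
move=> TS.
rewrite /char_poly /char_poly_mx.
have E : 'X%:M - map_mx polyC (T *m D *m S) =
   map_mx polyC T *m ('X%:M - map_mx polyC D) *m map_mx polyC S.
  rewrite mulmxBr mulmxBl !map_mxM; congr (_ - _).
  by rewrite mul_mx_scalar -scalemxAl -map_mxM TS map_mx1 scalemx1.
by rewrite E !det_mulmx mulrAC -det_mulmx -map_mxM TS map_mx1 det1 mul1r.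

Qed.

Lemma mx5 (R : comNzRingType) L0 J (O : 'M[R]_(L0, J)) (pi d : 'rV[R]_J) (Q : 'M[R]_J) :
  O *m diag_mx pi *m Q *m diag_mx d *m Q *m O^T =
  \matrix_(l, m) \sum_(j1 < J) \sum_(j2 < J) \sum_(j3 < J)
     (pi 0 j1 * Q j1 j2 * Q j2 j3 * (O l j1 * d 0 j2 * O m j3)).
Proof.
apply/matrixP => l m; rewrite !mul_mx_diag mxE.
under eq_bigr => j3 _ do (rewrite !mxE big_distrl /=; under eq_bigr => j2 _ do rewrite !mxE big_distrl big_distrl /=).
under eq_bigr => j3 _ do (under eq_bigr => j2 _ do (rewrite big_distrl /=; under eq_bigr => j1 _ do rewrite mxE)).
rewrite mxE; under eq_bigr => j3 _ do rewrite exchange_big /=.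
rewrite exchange_big /=; apply: eq_bigr => j1 _.
rewrite exchange_big /=; apply: eq_bigr => j2 _; apply: eq_bigr => j3 _.
ring.
Qed.


Lemma bconj (R : comUnitRingType) n (A S D N Pm : 'M[R]_n) :
  Pm = A *m S -> N = A *m D *m S -> A \in unitmx -> S \in unitmx ->
  invmx Pm *m N = invmx S *m D *m S.
Proof.
move=> -> -> UA US.
have -> : A *m D *m S = (A *m S) *m (invmx S *m D *m S).
  by rewrite !mulmxA -(mulmxA A S) (mulmxV US) mulmx1.
by rewrite mulKmx // unitmx_mul UA US.
Qed.

Section A.
Variable R : realType.
Notation leb := (@lebesgue_measure R).

Lemma intZ (c : R -> R) (k : R) : leb.-integrable setT (fun x => (c x)%:E) ->
  (\int[leb]_x (k * c x)%:E = (k * Rintegral leb setT c)%:E)%E.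
Proof.
move=> ic.
under eq_integral do rewrite EFinM.
rewrite integralZl //= /Rintegral EFinM fineK //.
exact: integrable_fin_num.
Qed.

Lemma int3 (G : R -> R -> R -> R) a b c :
  (forall x y z, G x y z = a x * b y * c z) ->
  leb.-integrable setT (fun x => (a x)%:E) ->
  leb.-integrable setT (fun x => (b x)%:E) ->
  leb.-integrable setT (fun x => (c x)%:E) ->
  fine (\int[leb]_x1 \int[leb]_x2 \int[leb]_x3 (G x1 x2 x3)%:E)%E =
  Rintegral leb setT a * Rintegral leb setT b * Rintegral leb setT c.
Proof.
move=> HG ia ib ic.
have -> : G = fun x y z => (a x * b y) * c z.
  by apply/funext => x; apply/funext => y; apply/funext => z.
under eq_integral => x1 _ do under eq_integral => x2 _ do rewrite intZ //.
under eq_integral => x1 _ do under eq_integral => x2 _ do rewrite mulrAC.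
under eq_integral => x1 _ do rewrite intZ //.
under eq_integral => x1 _ do rewrite -mulrA mulrC.
by rewrite intZ //=; ring.
Qed.

Lemma lip_cont (K : R -> R) :
  (exists C : R, forall y z, `|K y - K z| <= C * `|y - z|) -> continuous K.
Proof.
case=> C HC y.
apply/cvgrPdist_lt => e e0.
have C1 : 0 < `|C| + 1 by rewrite ltr_wpDl.
near=> z.
have Hz : `|y - z| < e / (`|C| + 1).
  near: z.
  exact: ((@cvgrPdist_lt _ _ _ _ _ (fun z : R => z) y).1 (@cvg_id _ (nbhs y)) (e / (`|C| + 1)) (divr_gt0 e0 C1)).
have h1 := HC y z.
have h2 : C * `|y - z| <= (`|C| + 1) * `|y - z|.
  by apply: ler_wpM2r => //; rewrite (le_trans (real_ler_norm _)) ?num_real // lerDl.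
rewrite ltr_pdivlMr // in Hz.
rewrite mulrC in Hz.
lra.
Unshelve. all: by end_near.
Qed.

End A.
Section B.
Variable R : realType.
Notation leb := (@lebesgue_measure R).

Lemma intf1 (g : R -> R) : measurable_fun setT g -> (forall x, 0 <= g x) ->
  (\int[leb]_x (g x)%:E = 1)%E ->
  leb.-integrable setT (fun x => (g x)%:E) /\ Rintegral leb setT g = 1.
Proof.
move=> mg g0 g1; split; last by rewrite /Rintegral g1.
apply/integrableP; split; first exact/measurable_EFinP.
under eq_integral do rewrite abse_EFin ger0_norm //.
by rewrite g1 ltry.
Qed.

Lemma intKLf (K : R -> R) L x (g : R -> R) :
  continuous K -> (exists C : R, forall y, `|K y| <= C) ->
  measurable_fun setT g -> (forall x, 0 <= g x) ->
  leb.-integrable setT (fun x => (g x)%:E) ->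
  leb.-integrable setT (fun y => (KL K L x y * g y)%:E).
Proof.
move=> cK [C HC] mg g0 ig.
apply: (le_integrable _ _ _ (integrableZl measurableT (2 ^+ L * C) ig)) => //.
  apply/measurable_EFinP; apply: measurable_funM => //.
  rewrite /KL; apply: measurable_funM => //.
  apply: measurableT_comp; first exact: continuous_measurable_fun.
  apply: measurable_funM => //; apply: measurable_funB => //.
move=> y _; rewrite -EFinM !abse_EFin lee_fin /KL !normrM.
rewrite (ger0_norm (g0 y)) ger0_norm ?exprn_ge0 // ler_wpM2r //.
rewrite ler_wpM2l ?exprn_ge0 //.
by rewrite (le_trans (HC _)) // real_ler_norm ?num_real.
Qed.
End B.

Theorem lemma11 (R : realType) (J : nat) (pi : 'rV[R]_J) (Q : 'M[R]_J)
  (f : 'I_J -> R -> R) (K : R -> R) (L L0 : nat) (h : 'I_L0 -> R -> R)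
  (* HMM: pi is a probability vector, Q a transition matrix *)
  (pi_ge0 : forall j, 0 <= pi 0 j) (pi_sum1 : \sum_(j < J) pi 0 j = 1)
  (Q_ge0 : forall i j, 0 <= Q i j) (Q_row1 : forall i, \sum_(j < J) Q i j = 1)
  (* emission densities *)
  (f_meas : forall j, measurable_fun setT (f j))
  (f_ge0 : forall j x, 0 <= f j x)
  (f_int1 : forall j, (\int[@lebesgue_measure R]_x (f j x)%:E = 1)%E)
  (* K bounded, Lipschitz, supported in [-1,1] *)
  (K_bdd : exists C : R, forall y, `|K y| <= C)
  (K_lip : exists C : R, forall y z, `|K y - K z| <= C * `|y - z|)
  (K_supp : forall y, 1 < `|y| -> K y = 0)
  (* the h_l have finite (conditional) expectations *)
  (h_meas : forall l, measurable_fun setT (h l))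
  (h_int : forall l j, (@lebesgue_measure R).-integrable setT
                          (fun x => (h l x * f j x)%:E)) :
  let M := Mmat pi Q f K L h in
  let P := Pmat pi Q f h in
  let O := Omat f h in
  let D := Dmat f K L in
  (forall x, M x = O *m diag_mx pi *m Q *m D x *m Q *m O^T) /\
  P = O *m diag_mx pi *m (Q *m Q) *m O^T /\
  (forall V : 'M[R]_(L0, J), V^T *m P *m V \in unitmx ->
     let S := Q *m O^T *m V in
     S \in unitmx /\
     (forall x, Bmat (M x) P V = invmx S *m D x *m S) /\
     (forall x, char_poly (Bmat (M x) P V) =
                \prod_(j < J) ('X - (KLf K L (f j) x)%:P))).
Proof.
move=> M P O D.
have Kc := @lip_cont R K K_lip.
have If j := @intf1 R _ (f_meas j) (f_ge0 j) (f_int1 j).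
have IK x j := @intKLf R K L x _ Kc K_bdd (f_meas j) (f_ge0 j) (If j).1.
have HM : forall x, M x = O *m diag_mx pi *m Q *m D x *m Q *m O^T.
  move=> x; rewrite /D /Dmat mx5 /M /Mmat; apply/matrixP => l m; rewrite !mxE /hmmE3.
  apply: eq_bigr => j1 _; apply: eq_bigr => j2 _; apply: eq_bigr => j3 _.
  rewrite (@int3 _ _ (fun x1 => h l x1 * f j1 x1) (fun x2 => KL K L x x2 * f j2 x2) (fun x3 => h m x3 * f j3 x3) _ (h_int l j1) (IK x j2) (h_int m j3)); last by move=> *; ring.
  by rewrite /O /Omat !mxE /hmmCond1 /KLf; congr (_ * (_ * _ * _)).
have HP : P = O *m diag_mx pi *m (Q *m Q) *m O^T.
  have -> : O *m diag_mx pi *m (Q *m Q) *m O^T = O *m diag_mx pi *m Q *m diag_mx (const_mx 1) *m Q *m O^T.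
    by rewrite diag_const_mx mulmx1 !mulmxA.
  rewrite mx5 /P /Pmat; apply/matrixP => l m; rewrite !mxE /hmmE3.
  apply: eq_bigr => j1 _; apply: eq_bigr => j2 _; apply: eq_bigr => j3 _.
  rewrite (@int3 _ _ (fun x1 => h l x1 * f j1 x1) (fun x2 => f j2 x2) (fun x3 => h m x3 * f j3 x3) _ (h_int l j1) (If j2).1 (h_int m j3)); last by move=> *; ring.
  rewrite /O /Omat !mxE /hmmCond1; congr (_ * (_ * _ * _)); exact: (If j2).2.
split => //; split => //.
move=> V PV S.
have E1 : V^T *m P *m V = (V^T *m O *m diag_mx pi *m Q) *m S by rewrite HP /S !mulmxA.
have E2 x : V^T *m M x *m V = (V^T *m O *m diag_mx pi *m Q) *m D x *m S by rewrite HM /S !mulmxA.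
rewrite E1 unitmx_mul in PV; case/andP: PV => UA US.
have HB x : Bmat (M x) P V = invmx S *m D x *m S.
  rewrite /Bmat; exact: (@bconj _ _ (V^T *m O *m diag_mx pi *m Q) S (D x) _ _ E1 (E2 x) UA US).
split => //; split => // x.
rewrite HB (@charpoly_conj _ _ S (invmx S) (D x) (mulVmx US)) /D /Dmat (char_poly_trig (diag_mx_is_trig _)).
by apply: eq_bigr => j _; rewrite !mxE eqxx mulr1n.
Qed.
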